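(* Let $n\ge 1$ and let $H_n$ be the pyrene system with $n$ pyrene fragments. For every perfect matching $M$ of $H_n$, $f(H_n,M)=h(M)$.
   Context: Pyrene system: draw the hexagonal lattice so that every hexagon has two vertical sides; horizontally adjacent hexagons then share a vertical edge. For $n\ge1$, $H_n$ is the hexagonal system (the plane graph formed by the vertices and edges of the following $4n$ hexagons) consisting of a horizontal linear row of $2n$ hexagons $h_{1,1},h_{1,2},h_{2,1},h_{2,2},\dots,h_{n,1},h_{n,2}$, consecutive ones sharing a vertical edge, together with, for each $i=1,\dots,n$, a hexagon $s_{i,1}$ lying directly above and a hexagon $s_{i,2}$ lying directly below the common edge of $h_{i,1}$ and $h_{i,2}$ (each of $s_{i,1},s_{i,2}$ shares an edge with both $h_{i,1}$ and $h_{i,2}$). Each set $\{h_{i,1},h_{i,2},s_{i,1},s_{i,2}\}$ is a pyrene fragment. For a perfect matching $M$ of a graph $G$: a forcing set of $M$ is a subset $S\subseteq M$ contained in no other perfect matching of $G$; the forcing number $f(G,M)$ is the minimum size of a forcing set of $M$. A cycle is $M$-alternating if its edges alternate between $M$ and $E(G)\setminus M$. An $M$-resonant set is a set of pairwise vertex-disjoint $M$-alternating hexagons (faces), and $h(M)$ is the maximum size of an $M$-resonant set. *)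

(* Defs.v *)
From mathcomp Require Import all_boot.
Set Implicit Arguments. Unset Strict Implicit. Unset Printing Implicit Defensive.

(* Hexagonal lattice (hexagons with two vertical sides) drawn as a brick wall:
   vertices (x,y) in Z^2; (x,y)-(x+1,y) is an edge (a slanted side of the
   hexagonal drawing) and (x,y)-(x,y+1) is a vertical edge when x+y is even.
   The hexagon with anchor (i,j), i+j even, has cyclically ordered vertices
   (i,j),(i+1,j),(i+2,j),(i+2,j+1),(i+1,j+1),(i,j+1); its vertical sides are
   (i,j)-(i,j+1) and (i+2,j)-(i+2,j+1).  Hexagons (i,j),(i+2,j) are horizontally
   adjacent (share a vertical edge), and (i+1,j+1) / (i+1,j-1) lie directly
   above / below their common edge.

   H_n:  row hexagons h at anchors (2m+1,1), m = 0..2n-1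
         (h_{k,1} = (4k+1,1), h_{k,2} = (4k+3,1)),
         s_{k,1} at (4k+2,2) (above the common edge of h_{k,1},h_{k,2}),
         s_{k,2} at (4k+2,0) (below it),  k = 0..n-1.
   All coordinates lie in [0,4n+1] x [0,3]. *)

Definition V (n : nat) := ('I_(4 * n).+2 * 'I_4)%type.

Definition vtx (n x y : nat) : V n := (inord x, inord y).

Definition hexcoords (n : nat) : seq (nat * nat) :=
  [seq (2 * m + 1, 1) | m <- iota 0 (2 * n)]
  ++ [seq (4 * k + 2, 2) | k <- iota 0 n]
  ++ [seq (4 * k + 2, 0) | k <- iota 0 n].

Definition hexagons (n : nat) : {set V n} :=
  [set a : V n | ((a.1 : nat), (a.2 : nat)) \in hexcoords n].

Definition hv (n : nat) (a : V n) (k : 'I_6) : V n :=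
  let x := (a.1 : nat) in let y := (a.2 : nat) in
  match (k : nat) with
  | 0 => vtx n x y
  | 1 => vtx n x.+1 y
  | 2 => vtx n x.+2 y
  | 3 => vtx n x.+2 y.+1
  | 4 => vtx n x.+1 y.+1
  | _ => vtx n x y.+1
  end.

Definition hexV (n : nat) (a : V n) : {set V n} := [set hv a k | k : 'I_6].

Definition hexE (n : nat) (a : V n) (k : 'I_6) : {set V n} :=
  [set hv a k; hv a (ordS k)].

Definition Vset (n : nat) : {set V n} := \bigcup_(a in hexagons n) hexV a.
Definition Eset (n : nat) : {set {set V n}} :=
  \bigcup_(a in hexagons n) [set hexE a k | k : 'I_6].

Definition perfect_matching (n : nat) (M : {set {set V n}}) : bool :=
  (M \subset Eset n) &&
  [forall v in Vset n, #|[set e in M | v \in e]| == 1].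

Definition forcing_set (n : nat) (M S : {set {set V n}}) : bool :=
  (S \subset M) &&
  [forall M' : {set {set V n}},
     (perfect_matching M' && (S \subset M')) ==> (M' == M)].

(* f(H_n, M): minimum size of a forcing set of M (M itself is forcing) *)
Definition forcing_number (n : nat) (M : {set {set V n}}) : nat :=
  \big[minn/#|M|]_(S : {set {set V n}} | forcing_set M S) #|S|.

Definition alternating (n : nat) (M : {set {set V n}}) (a : V n) : bool :=
  [forall k : 'I_6, (hexE a k \in M) != (hexE a (ordS k) \in M)].

Definition resonant_set (n : nat) (M : {set {set V n}}) (R : {set V n}) : bool :=
  [&& R \subset hexagons n,
      [forall a in R, alternating M a] &
      [forall a in R, forall b in R, (a != b) ==> [disjoint hexV a & hexV b]]].

Definition hmax (n : nat) (M : {set {set V n}}) : nat :=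
  \max_(R : {set V n} | resonant_set M R) #|R|.

(* Main.v *)
Require Import Defs.
From mathcomp Require Import all_boot zify.
Set Implicit Arguments. Unset Strict Implicit. Unset Printing Implicit Defensive.


Definition ed n x1 y1 x2 y2 : {set V n} := [set vtx n x1 y1; vtx n x2 y2].

Lemma vtx_val n x y : x <= 4*n+1 -> y <= 3 ->
  ((vtx n x y).1 : nat) = x /\ ((vtx n x y).2 : nat) = y.
Proof. move=> hx hy; rewrite /vtx /= !inordK //; lia. Qed.

Lemma vtx_inj n x y x' y' : x <= 4*n+1 -> y <= 3 -> x' <= 4*n+1 -> y' <= 3 ->
  vtx n x y = vtx n x' y' -> x = x' /\ y = y'.
Proof.
move=> h1 h2 h3 h4 e.
have [a b] := vtx_val h1 h2; have [c d] := vtx_val h3 h4.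
have e1 := congr1 (fun v : V n => (v.1 : nat)) e.
have e2 := congr1 (fun v : V n => (v.2 : nat)) e.
by rewrite /= a c b d in e1 e2.
Qed.

Definition hx (c : nat * nat) (j : nat) : nat :=
  match j with 0 => c.1 | 1 => c.1.+1 | 2 | 3 => c.1.+2 | 4 => c.1.+1 | _ => c.1 end.
Definition hy (c : nat * nat) (j : nat) : nat :=
  match j with 0 | 1 | 2 => c.2 | _ => c.2.+1 end.

Lemma hv_eq n (a : V n) (j : 'I_6) :
  hv a j = vtx n (hx ((a.1 : nat), (a.2 : nat)) j) (hy ((a.1 : nat), (a.2 : nat)) j).
Proof. by case: j => [[|[|[|[|[|[|]]]]]] ?]. Qed.

Lemma ordS_val (j : 'I_6) : (ordS j : nat) = if (j : nat) == 5 then 0 else j.+1.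
Proof. by case: j => [[|[|[|[|[|[|]]]]]] ?]. Qed.

Goal forall n (a : V n), hexE a (inord 3) = hexE a (inord 3).
Proof. move=> n a. rewrite /hexE /=. Abort.

Definition anc (k t : nat) : nat * nat :=
  match t with 0 => (4*k+1, 1) | 1 => (4*k+3, 1) | 2 => (4*k+2, 2) | _ => (4*k+2, 0) end.

Lemma anc_mem n k t : k < n -> t < 4 -> anc k t \in hexcoords n.
Proof.
move=> hk ht; rewrite /hexcoords !mem_cat.
case: t ht => [|[|[|[|t]]]] // _ /=.
- apply/orP; left; apply/mapP; exists (2*k); first by rewrite mem_iota; lia.
  congr pair; lia.
- apply/orP; left; apply/mapP; exists (2*k+1); first by rewrite mem_iota; lia.
  congr pair; lia.
- apply/orP; right; apply/orP; left; apply/mapP; exists k => //; by rewrite mem_iota; lia.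
- apply/orP; right; apply/orP; right; apply/mapP; exists k => //; by rewrite mem_iota; lia.
Qed.

Lemma mem_anc n c : c \in hexcoords n -> exists k t, [/\ k < n, t < 4 & c = anc k t].
Proof.
rewrite /hexcoords !mem_cat => /orP [|/orP []] /mapP [m]; rewrite mem_iota => hm ->.
- exists (m %/ 2), (m %% 2); split; [lia|lia|].
  case: (boolP (odd m)) => o.
  + have -> : m %% 2 = 1 by lia. congr pair; lia.
  + have -> : m %% 2 = 0 by lia. congr pair; lia.
- by exists m, 2; split => //; lia.
- by exists m, 3; split => //; lia.
Qed.

Lemma anc_range k t : t < 4 -> (anc k t).1 <= 4*k+3 /\ (anc k t).2 <= 2.
Proof. by case: t => [|[|[|[|t]]]] //= _; lia. Qed.

Lemma hexagonsP n (a : V n) : a \in hexagons n ->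
  exists k t, [/\ k < n, t < 4 & a = vtx n (anc k t).1 (anc k t).2].
Proof.
rewrite inE => /mem_anc [k [t [hk ht e]]]; exists k, t; split => //.
rewrite -e /vtx /=; case: a {e} => a1 a2 /=. by rewrite !inord_val.
Qed.

Lemma anc_hex n k t : k < n -> t < 4 -> vtx n (anc k t).1 (anc k t).2 \in hexagons n.
Proof.
move=> hk ht; have [r1 r2] := anc_range k ht.
rewrite inE; have [-> ->] := vtx_val (n:=n) (x := (anc k t).1) (y := (anc k t).2) ltac:(lia) ltac:(lia).
by rewrite -surjective_pairing anc_mem.
Qed.

Definition nxt (j : nat) := if j == 5 then 0 else j.+1.

Lemma hexE_anc n k t (j : 'I_6) : k < n -> t < 4 ->
  hexE (vtx n (anc k t).1 (anc k t).2) j =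
  ed n (hx (anc k t) j) (hy (anc k t) j) (hx (anc k t) (nxt j)) (hy (anc k t) (nxt j)).
Proof.
move=> hk ht; have [r1 r2] := anc_range k ht.
rewrite /hexE !hv_eq.
have [-> ->] := vtx_val (n:=n) (x := (anc k t).1) (y := (anc k t).2) ltac:(lia) ltac:(lia).
by rewrite ordS_val -surjective_pairing.
Qed.

Lemma Eset_inv n e : e \in Eset n -> exists k t j,
  [/\ k < n, t < 4, j < 6 &
   e = ed n (hx (anc k t) j) (hy (anc k t) j) (hx (anc k t) (nxt j)) (hy (anc k t) (nxt j))].
Proof.
move=> /bigcupP [a /hexagonsP [k [t [hk ht ea]]]] /imsetP [j _ ->].
exists k, t, j; split => //; rewrite ea; exact: hexE_anc.
Qed.

Lemma hxy_range k t j : t < 4 -> j < 6 -> hx (anc k t) j <= 4*k+5 /\ hy (anc k t) j <= 3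
   /\ 4*k+1 <= hx (anc k t) j.
Proof. by case: t => [|[|[|[|t]]]] //= _; case: j => [|[|[|[|[|[|j]]]]]] //= _; lia. Qed.

Lemma inVset n k t j : k < n -> t < 4 -> j < 6 ->
  vtx n (hx (anc k t) j) (hy (anc k t) j) \in Vset n.
Proof.
move=> hk ht hj; apply/bigcupP; exists (vtx n (anc k t).1 (anc k t).2); first exact: anc_hex.
apply/imsetP; exists (Ordinal hj) => //; rewrite hv_eq.
have [r1 r2] := anc_range k ht.
by have [-> ->] := vtx_val (n:=n) (x := (anc k t).1) (y := (anc k t).2) ltac:(lia) ltac:(lia).
Qed.

Lemma in_ed n x y a b c d : x <= 4*n+1 -> y <= 3 -> a <= 4*n+1 -> b <= 3 ->
  c <= 4*n+1 -> d <= 3 -> vtx n x y \in ed n a b c d -> (x = a /\ y = b) \/ (x = c /\ y = d).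
Proof.
move=> h1 h2 h3 h4 h5 h6; rewrite !inE => /orP [] /eqP /vtx_inj; auto.
Qed.

Lemma ed_neq n a b c d a' b' c' d' :
  a <= 4*n+1 -> b <= 3 -> c <= 4*n+1 -> d <= 3 ->
  a' <= 4*n+1 -> b' <= 3 -> c' <= 4*n+1 -> d' <= 3 ->
  ~ (a = c /\ b = d) ->
  ~ ((a = a' /\ b = b' /\ c = c' /\ d = d') \/ (a = c' /\ b = d' /\ c = a' /\ d = b')) ->
  ed n a b c d != ed n a' b' c' d'.
Proof.
move=> *; apply/eqP => E.
have h1 : vtx n a b \in ed n a' b' c' d' by rewrite -E !inE eqxx.
have h2 : vtx n c d \in ed n a' b' c' d' by rewrite -E !inE eqxx orbT.
have h3 : vtx n a' b' \in ed n a b c d by rewrite E !inE eqxx.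
move/in_ed: h1 => /(_ ltac:(lia) ltac:(lia) ltac:(lia) ltac:(lia) ltac:(lia) ltac:(lia)) h1.
move/in_ed: h2 => /(_ ltac:(lia) ltac:(lia) ltac:(lia) ltac:(lia) ltac:(lia) ltac:(lia)) h2.
move/in_ed: h3 => /(_ ltac:(lia) ltac:(lia) ltac:(lia) ltac:(lia) ltac:(lia) ltac:(lia)) h3.
lia.
Qed.

Definition ledge (i : nat) : nat * nat * nat * nat :=
  match i with
  | 0 => (1,1,1,2) | 1 => (1,1,2,1) | 2 => (1,2,2,2) | 3 => (2,1,3,1)
  | 4 => (2,2,3,2) | 5 => (3,1,3,2) | 6 => (3,1,4,1) | 7 => (3,2,4,2)
  | 8 => (4,1,5,1) | 9 => (4,2,5,2) | 10 => (2,2,2,3) | 11 => (2,3,3,3)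
  | 12 => (3,3,4,3) | 13 => (4,2,4,3) | 14 => (2,0,2,1) | 15 => (2,0,3,0)
  | 16 => (3,0,4,0) | 17 => (4,0,4,1) | 18 => (0,1,1,1) | _ => (0,2,1,2)
  end.

Definition edk n k i : {set V n} :=
  let: (a, b, c, d) := ledge i in ed n (4*k+a) b (4*k+c) d.

Definition cm (k i : nat) (p1 p2 q1 q2 : nat) : Prop :=
  let: (a, b, c, d) := ledge i in
  (p1 = 4*k+a /\ p2 = b /\ q1 = 4*k+c /\ q2 = d) \/
  (q1 = 4*k+a /\ q2 = b /\ p1 = 4*k+c /\ p2 = d).

Fixpoint anyL (L : seq nat) (f : nat -> Prop) : Prop :=
  if L is i :: L' then f i \/ anyL L' f else False.

Lemma anyLP L f : anyL L f -> exists2 i, i \in L & f i.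
Proof.
elim: L => //= i L IH [h|/IH [j hj fj]]; first by exists i; rewrite ?inE ?eqxx.
by exists j; rewrite // inE hj orbT.
Qed.

Lemma ed_sym n a b c d : ed n a b c d = ed n c d a b.
Proof. by rewrite /ed setUC. Qed.

Lemma cm_ed n k i p1 p2 q1 q2 : cm k i p1 p2 q1 q2 -> ed n p1 p2 q1 q2 = edk n k i.
Proof.
rewrite /cm /edk; case: (ledge i) => [[[a b] c] d].
by case=> [[-> [-> [-> ->]]]|[-> [-> [-> ->]]]]; rewrite // ed_sym.
Qed.

Definition vL (dx dy : nat) : seq nat :=
  match dx, dy with
  | 1, 1 => [:: 18; 0; 1] | 1, 2 => [:: 19; 0; 2]
  | 2, 1 => [:: 1; 3; 14] | 2, 2 => [:: 2; 4; 10]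
  | 3, 1 => [:: 3; 6; 5] | 3, 2 => [:: 4; 7; 5]
  | 4, 1 => [:: 6; 8; 17] | 4, 2 => [:: 7; 9; 13]
  | 2, 3 => [:: 10; 11] | 3, 3 => [:: 11; 12] | 4, 3 => [:: 12; 13]
  | 2, 0 => [:: 14; 15] | 3, 0 => [:: 15; 16] | _, _ => [:: 16; 17]
  end.

Lemma complete_int n k dx dy e : k < n -> 1 <= dx <= 4 -> dy <= 3 ->
  (dx == 1) ==> ((dy == 1) || (dy == 2)) ->
  e \in Eset n -> vtx n (4*k+dx) dy \in e -> exists2 i, i \in vL dx dy & e = edk n k i.
Proof.
move=> hk hdx hdy hd /Eset_inv [k' [t [j [hk' ht hj ->]]]] hv.
have [r1 [r2 r3]] := hxy_range k' ht hj.
have hjn : nxt j < 6 by rewrite /nxt; case: eqP => [//|]; lia.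
have [s1 [s2 s3]] := hxy_range k' ht hjn.
move/in_ed: hv => /(_ ltac:(lia) ltac:(lia) ltac:(lia) ltac:(lia) ltac:(lia) ltac:(lia)) hv.
have [i hi ci] : exists2 i, i \in vL dx dy & cm k i (hx (anc k' t) j) (hy (anc k' t) j)
   (hx (anc k' t) (nxt j)) (hy (anc k' t) (nxt j)).
  apply: anyLP.
  clear r1 r2 r3 s1 s2 s3 hjn.
  move: hdx hd hv; case: dx => [|[|[|[|[|dx]]]]] // _;
  move: hdy; case: dy => [|[|[|[|dy]]]] // _ hd //;
  move: ht; case: t => [|[|[|[|t]]]] // _;
  move: hj; case: j => [|[|[|[|[|[|j]]]]]] // _ hv; rewrite /cm /=; simpl in hv; lia.
by exists i => //; rewrite (cm_ed n ci).
Qed.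

Lemma complete_end n dy e : 1 <= dy <= 2 ->
  e \in Eset n -> vtx n (4*n+1) dy \in e ->
  exists2 i, i \in (if dy == 1 then [:: 18; 0] else [:: 19; 0]) & e = edk n n i.
Proof.
move=> hdy /Eset_inv [k' [t [j [hk' ht hj ->]]]] hv.
have [r1 [r2 r3]] := hxy_range k' ht hj.
have hjn : nxt j < 6 by rewrite /nxt; case: eqP => [//|]; lia.
have [s1 [s2 s3]] := hxy_range k' ht hjn.
move/in_ed: hv => /(_ ltac:(lia) ltac:(lia) ltac:(lia) ltac:(lia) ltac:(lia) ltac:(lia)) hv.
have [i hi ci] : exists2 i, i \in (if dy == 1 then [:: 18; 0] else [:: 19; 0]) &
   cm n i (hx (anc k' t) j) (hy (anc k' t) j) (hx (anc k' t) (nxt j)) (hy (anc k' t) (nxt j)).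
  apply: anyLP.
  clear s1 s2 s3 hjn.
  move: hdy hv; case: dy => [|[|[|dy]]] // _;
  move: ht r1 r2 r3; case: t => [|[|[|[|t]]]] // _;
  move: hj; case: j => [|[|[|[|[|[|j]]]]]] // _ r1 r2 r3 hv; rewrite /cm /=; simpl in hv, r1; lia.
by exists i => //; rewrite (cm_ed n ci).
Qed.

Fixpoint none (s : seq bool) : bool := if s is b :: s' then ~~ b && none s' else true.
Fixpoint ex1 (s : seq bool) : bool :=
  if s is b :: s' then (if b then none s' else ex1 s') else false.

Lemma none_count s : none s = (count id s == 0).
Proof. by elim: s => //= b s ->; case: b. Qed.

Lemma ex1_count s : ex1 s = (count id s == 1).
Proof. elim: s => //= b s ->; case: b => //=; rewrite none_count; by rewrite add1n. Qed.

Lemma pm_sub n M : perfect_matching M -> M \subset Eset n.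
Proof. by case/andP. Qed.

Lemma pm_card n M v : perfect_matching M -> v \in Vset n -> #|[set e in M | v \in e]| = 1.
Proof. by case/andP => _ /forall_inP h /h /eqP. Qed.

Lemma pm_uniq n M v e1 e2 : perfect_matching M -> v \in Vset n ->
  e1 \in M -> e2 \in M -> v \in e1 -> v \in e2 -> e1 = e2.
Proof.
move=> pm hv h1 h2 v1 v2; have /eqP/cards1P [x hx] := pm_card pm hv.
have : e1 \in [set e in M | v \in e] by rewrite inE h1 v1.
have : e2 \in [set e in M | v \in e] by rewrite inE h2 v2.
by rewrite hx !inE => /eqP -> /eqP ->.
Qed.

Lemma pm_ex1 n (M : {set {set V n}}) (v : V n) (Ls : seq {set V n}) : perfect_matching M -> v \in Vset n ->
  (forall e : {set V n}, e \in Eset n -> v \in e -> e \in Ls) -> all (fun e : {set V n} => v \in e) Ls -> uniq Ls ->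
  ex1 [seq e \in M | e <- Ls].
Proof.
move=> pm hv hc /allP ha hu; rewrite ex1_count count_map.
have E : [set e in M | v \in e] = [set e | e \in filter (mem M) Ls].
  apply/setP => e; rewrite !inE mem_filter.
  apply/andP/andP => [[h1 h2]|[h1 h2]]; split => //.
  - apply: hc h2; exact: (subsetP (pm_sub pm)).
  - exact: ha.
have := pm_card pm hv; rewrite E cardsE.
rewrite (card_uniqP _) ?filter_uniq // size_filter => ->; done.
Qed.


Lemma inVset' n k t j x y : k < n -> t < 4 -> j < 6 ->
  x = hx (anc k t) j -> y = hy (anc k t) j -> vtx n x y \in Vset n.
Proof. move=> hk ht hj -> ->; exact: inVset. Qed.

Lemma vcons n M k dx dy : perfect_matching M -> k < n -> 1 <= dx <= 4 -> dy <= 3 ->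
  (dx == 1) ==> ((dy == 1) || (dy == 2)) ->
  ex1 [seq edk n k i \in M | i <- vL dx dy].
Proof.
move=> pm hk hdx hdy hd.
have hd' : dx = 1 -> dy = 1 \/ dy = 2.
  by move=> e; move: hd; rewrite e /=; case/orP => /eqP; auto.
rewrite (_ : [seq edk n k i \in M | i <- vL dx dy] = [seq e \in M | e <- map (edk n k) (vL dx dy)]);
  last by rewrite -map_comp.
apply: (pm_ex1 (v := vtx n (4*k+dx) dy) pm).
- move: hdx hd hd'; case: dx => [|[|[|[|[|dx]]]]] // _ _;
  move: hdy; case: dy => [|[|[|[|dy]]]] // _ hd; try (exfalso; lia);
  first [ by apply: (@inVset' n k 0 0) => //=; lia | by apply: (@inVset' n k 0 1) => //=; lia | by apply: (@inVset' n k 0 2) => //=; lia | by apply: (@inVset' n k 0 3) => //=; lia | by apply: (@inVset' n k 0 4) => //=; lia | by apply: (@inVset' n k 0 5) => //=; lia | by apply: (@inVset' n k 1 0) => //=; lia | by apply: (@inVset' n k 1 1) => //=; lia | by apply: (@inVset' n k 1 2) => //=; lia | by apply: (@inVset' n k 1 3) => //=; lia | by apply: (@inVset' n k 1 4) => //=; lia | by apply: (@inVset' n k 1 5) => //=; lia | by apply: (@inVset' n k 2 0) => //=; lia | by apply: (@inVset' n k 2 1) => //=; lia | by apply: (@inVset' n k 2 2) => //=; lia | by apply: (@inVset' n k 2 3) => //=; lia | by apply: (@inVset' n k 2 4) => //=; lia | by apply: (@inVset' n k 2 5) => //=; lia | by apply: (@inVset' n k 3 0) => //=; lia | by apply: (@inVset'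 n k 3 1) => //=; lia | by apply: (@inVset' n k 3 2) => //=; lia | by apply: (@inVset' n k 3 3) => //=; lia | by apply: (@inVset' n k 3 4) => //=; lia | by apply: (@inVset' n k 3 5) => //=; lia ].
- move=> e he hv; have [i hi ->] := complete_int hk hdx hdy hd he hv; exact: map_f.
- move: hdx hd hd'; case: dx => [|[|[|[|[|dx]]]]] // _ _;
  move: hdy; case: dy => [|[|[|[|dy]]]] // _ hd; try (exfalso; lia);
  by rewrite /edk /= !inE !eqxx ?orbT.
- move: hdx hd hd'; case: dx => [|[|[|[|[|dx]]]]] // _ _;
  move: hdy; case: dy => [|[|[|[|dy]]]] // _ hd; try (exfalso; lia);
  rewrite /edk /= !inE ?negb_or;
  repeat (apply/andP; split); try done; apply: ed_neq; lia.
Qed.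


Lemma bigmin_le (I : finType) (P : pred I) (F : I -> nat) x0 i0 :
  P i0 -> \big[minn/x0]_(i | P i) F i <= F i0.
Proof.
move=> hP; have : i0 \in index_enum I by rewrite mem_index_enum.
elim: (index_enum I) => // j r IH; rewrite inE big_cons => /orP [/eqP <-|/IH h].
  by rewrite hP geq_minl.
by case: (P j) => //; rewrite geq_min h orbT.
Qed.

Lemma le_bigmin (I : finType) (P : pred I) (F : I -> nat) x0 m :
  m <= x0 -> (forall i, P i -> m <= F i) -> m <= \big[minn/x0]_(i | P i) F i.
Proof.
move=> h0 h; elim/big_ind: _ => // x y hx hy; by rewrite leq_min hx hy.
Qed.

Lemma hv_anc n k t (j : 'I_6) : k < n -> t < 4 ->
  hv (vtx n (anc k t).1 (anc k t).2) j = vtx n (hx (anc k t) j) (hy (anc k t) j).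
Proof.
move=> hk ht; have [r1 r2] := anc_range k ht.
rewrite hv_eq.
by have [-> ->] := vtx_val (n:=n) (x := (anc k t).1) (y := (anc k t).2) ltac:(lia) ltac:(lia).
Qed.

Lemma hxy_inj c (j j' : nat) : j < 6 -> j' < 6 -> hx c j = hx c j' -> hy c j = hy c j' -> j = j'.
Proof.
case: c => c1 c2.
by case: j => [|[|[|[|[|[|j]]]]]] // _; case: j' => [|[|[|[|[|[|j']]]]]] //= _; lia.
Qed.

Lemma hv_inj n (a : V n) (j j' : 'I_6) : a \in hexagons n -> hv a j = hv a j' -> j = j'.
Proof.
move=> /hexagonsP [k [t [hk ht ->]]]; rewrite !hv_anc //.
have [r1 [r2 _]] := hxy_range k ht (ltn_ord j).
have [s1 [s2 _]] := hxy_range k ht (ltn_ord j').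
move/vtx_inj => /(_ ltac:(lia) ltac:(lia) ltac:(lia) ltac:(lia)) [e1 e2].
apply: val_inj; exact: hxy_inj e1 e2.
Qed.

Lemma hexE_sub_Eset n (a : V n) j : a \in hexagons n -> hexE a j \in Eset n.
Proof. move=> ha; apply/bigcupP; exists a => //; exact: imset_f. Qed.

Lemma in_hexE n (a : V n) j v : (v \in hexE a j) = (v == hv a j) || (v == hv a (ordS j)).
Proof. by rewrite !inE. Qed.

Lemma hexE_hexV n (a : V n) j v : v \in hexE a j -> v \in hexV a.
Proof. by rewrite in_hexE => /orP [] /eqP ->; apply: imset_f. Qed.

Definition Ea n (a : V n) : {set {set V n}} := [set hexE a j | j : 'I_6].

Definition switch n (M : {set {set V n}}) a := (M :\: Ea a) :|: (Ea a :\: M).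

Lemma switch_pm n (M : {set {set V n}}) a : perfect_matching M -> a \in hexagons n ->
  alternating M a -> perfect_matching (switch M a).
Proof.
move=> pm ha alt; apply/andP; split.
  apply/subsetP => e; rewrite !inE => /orP [/andP [_ h]|/andP [_ /imsetP [j _ ->]]].
  - exact: (subsetP (pm_sub pm)).
  - exact: hexE_sub_Eset.
apply/forall_inP => v hvV; apply/eqP.
case: (boolP (v \in hexV a)) => hva.
- move/imsetP: hva => [i _ ->].
  set e1 := hexE a i; set e2 := hexE a (ord_pred i).
  have hal := forallP alt (ord_pred i); rewrite ord_predK -/e1 -/e2 in hal.
  have v1 : hv a i \in e1 by rewrite in_hexE eqxx.
  have v2 : hv a i \in e2 by rewrite in_hexE ord_predK eqxx orbT.
  have e1E : e1 \in Ea a by apply: imset_f.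
  have e2E : e2 \in Ea a by apply: imset_f.
  have hVi : hv a i \in Vset n by apply/bigcupP; exists a => //; apply: imset_f.
  have inEa : forall e, e \in Ea a -> hv a i \in e -> e = e1 \/ e = e2.
    move=> e /imsetP [j _ ->]; rewrite in_hexE => /orP [] /eqP /esym /(hv_inj ha) ej.
      by left; rewrite ej.
    by right; rewrite /e2 -ej ordSK.
  clearbody e1 e2.
  wlog h1 : e1 e2 hal v1 v2 e1E e2E inEa / (e1 \in M) && (e2 \notin M).
    move=> W; case: (boolP (e1 \in M)) => m1.
      apply: (W e1 e2) => //; by move: hal; rewrite m1; case: (e2 \in M).
    apply: (W e2 e1) => //.
    - by rewrite eq_sym.
    - by move=> e he hi; case: (inEa e he hi); auto.
    - by move: hal; rewrite (negbTE m1); case: (e2 \in M).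
  move/andP: h1 => [m1 m2].
  suff -> : [set e in switch M a | hv a i \in e] = [set e2] by rewrite cards1.
  apply/setP => e; rewrite !inE.
  apply/idP/idP.
  + move=> /andP [/orP [/andP [nE eM]|/andP [eNM eE]] he].
    * by rewrite -(pm_uniq pm hVi m1 eM v1 he) e1E in nE.
    * case: (inEa e eE he) => E; rewrite E in eNM *; last by rewrite eqxx.
      by rewrite m1 in eNM.
  + by move/eqP ->; rewrite e2E m2 v2 orbT.
- have -> : [set e in switch M a | v \in e] = [set e in M | v \in e].
    apply/setP => e; rewrite !inE; apply/andP/andP => [[]|[eM he]].
    + move=> /orP [/andP [_ ->] //|/andP [_ /imsetP [j _ ->]] hj].
      by rewrite (hexE_hexV hj) in hva.
    + split => //; apply/orP; left; rewrite eM andbT.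
      apply/negP => /imsetP [j _ ej]; rewrite ej in he.
      by rewrite (hexE_hexV he) in hva.
  exact: pm_card pm hvV.
Qed.

Lemma alt_edge n (M : {set {set V n}}) a : alternating M a -> exists2 e, e \in M & e \in Ea a.
Proof.
move=> /forallP /(_ ord0) h'; case: (boolP (hexE a ord0 \in M)) => h.
  by exists (hexE a ord0) => //; apply: imset_f.
exists (hexE a (ordS ord0)); last by apply: imset_f.
by move: h'; rewrite (negbTE h); case: (_ \in M).
Qed.

Lemma lower n (M S : {set {set V n}}) (R : {set V n}) :
  S \subset M -> (forall a, a \in R -> exists2 e, e \in S & e \in Ea a) ->
  resonant_set M R -> #|R| <= #|S|.
Proof.
move=> sSM hit /and3P [_ _ /forall_inP dis].
pose chi a := odflt set0 [pick e in S | e \in Ea a].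
have chiP : forall a, a \in R -> chi a \in S /\ chi a \in Ea a.
  move=> a ha; rewrite /chi; case: pickP => [e /andP [h1 h2] //|none].
  by have [e h1 h2] := hit a ha; have := none e; rewrite h1 h2.
have inj : {in R &, injective chi}.
  move=> a b ha hb e; apply/eqP; apply/negP => /negP nab.
  have /forall_inP /(_ b hb) /implyP /(_ nab) D := dis a ha.
  have [_ /imsetP [j _ ej]] := chiP a ha.
  have [_ /imsetP [j' _ ej']] := chiP b hb.
  have xa : hv a j \in hexV a by apply: imset_f.
  have xb : hv a j \in hexV b.
    by apply: (hexE_hexV (j := j')); rewrite -ej' -e ej in_hexE eqxx.
  by rewrite (disjointFr D xa) in xb.
rewrite -(card_in_imset inj); apply: subset_leq_card.
by apply/subsetP => e /imsetP [a ha ->]; case: (chiP a ha).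
Qed.

Lemma forcing_hit n (M S : {set {set V n}}) (R : {set V n}) :
  perfect_matching M -> forcing_set M S -> resonant_set M R ->
  forall a, a \in R -> exists2 e, e \in S & e \in Ea a.
Proof.
move=> pm /andP [sSM /forallP fS] /and3P [/subsetP sRH /forall_inP alts _] a ha.
case: (boolP [exists e in S, e \in Ea a]) => [/exists_inP [e h1 h2]|none].
  by exists e.
have := fS (switch M a); rewrite switch_pm ?sRH ?alts //=.
have -> : S \subset switch M a.
  apply/subsetP => e eS; rewrite !inE (subsetP sSM e eS) andbT.
  apply/orP; left; apply/negP => eE; move/negP: none; apply; apply/exists_inP; by exists e.
move=> /eqP sw.
have [e eM eE] := alt_edge (alts a ha).
have : e \in switch M a by rewrite sw.
by rewrite !inE eE eM.
Qed.

Lemma fn_ge_h n (M : {set {set V n}}) : perfect_matching M -> hmax M <= forcing_number M.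
Proof.
move=> pm; apply/bigmax_leqP => R hR.
apply: le_bigmin.
  apply: (lower (M := M)) => //; move=> a ha.
  have /and3P [/subsetP _ /forall_inP alts _] := hR.
  exact: alt_edge (alts a ha).
move=> S hS; apply: (lower (M := M)) => //.
  by case/andP: hS.
exact: forcing_hit hS hR.
Qed.


Definition alt6 (a b c d e f : bool) := (a != b) && (b != c) && (c != d) && (d != e) && (e != f) && (f != a).

Ltac brute := repeat (match goal with
  | |- forall b : bool, _ => let x := fresh "x" in intro x; destruct x
  | |- _ -> _ => let H := fresh "H" in intro H; simpl in H; (discriminate H || clear H)
  end); reflexivity.

Lemma local_ord : forall l : bool, forall x0 : bool,
  forall x1 : bool,
  ex1 [:: l; x0; x1] ->
  forall x2 : bool,
  ex1 [:: l; x0; x2] ->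
  forall x3 : bool,
  forall x14 : bool,
  ex1 [:: x1; x3; x14] ->
  forall x4 : bool,
  forall x10 : bool,
  ex1 [:: x2; x4; x10] ->
  forall x5 : bool,
  forall x6 : bool,
  ex1 [:: x3; x6; x5] ->
  forall x7 : bool,
  ex1 [:: x4; x7; x5] ->
  forall x8 : bool,
  forall x17 : bool,
  ex1 [:: x6; x8; x17] ->
  forall x9 : bool,
  forall x13 : bool,
  ex1 [:: x7; x9; x13] ->
  forall x11 : bool,
  ex1 [:: x10; x11] ->
  forall x12 : bool,
  ex1 [:: x11; x12] ->
  ex1 [:: x12; x13] ->
  forall x15 : bool,
  ex1 [:: x14; x15] ->
  forall x16 : bool,
  ex1 [:: x15; x16] ->
  ex1 [:: x16; x17] ->
  (x8 == x9) && ~~(x1 && x8) && (x1 ==> alt6 x1 x3 x5 x4 x2 x0) && (x8 ==> alt6 x6 x8 false x9 x7 x5) && ((~~x1 && ~~x8) ==> (alt6 x4 x7 x13 x12 x11 x10 && alt6 x15 x16 x17 x6 x3 x14 && (x4 || x7) && (x3 || x6))).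
Proof. brute. Qed.

Lemma uniq_ord : forall l : bool, forall x0 : bool,
  forall x1 : bool,
  ex1 [:: l; x0; x1] ->
  forall x2 : bool,
  ex1 [:: l; x0; x2] ->
  forall x3 : bool,
  forall x14 : bool,
  ex1 [:: x1; x3; x14] ->
  forall x4 : bool,
  forall x10 : bool,
  ex1 [:: x2; x4; x10] ->
  forall x5 : bool,
  forall x6 : bool,
  ex1 [:: x3; x6; x5] ->
  forall x7 : bool,
  ex1 [:: x4; x7; x5] ->
  forall x8 : bool,
  forall x17 : bool,
  ex1 [:: x6; x8; x17] ->
  forall x9 : bool,
  forall x13 : bool,
  ex1 [:: x7; x9; x13] ->
  forall x11 : bool,
  ex1 [:: x10; x11] ->
  forall x12 : bool,
  ex1 [:: x11; x12] ->
  ex1 [:: x12; x13] ->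
  forall x15 : bool,
  ex1 [:: x14; x15] ->
  forall x16 : bool,
  ex1 [:: x15; x16] ->
  ex1 [:: x16; x17] ->
  forall y0 : bool,
  forall y1 : bool,
  ex1 [:: l; y0; y1] ->
  forall y2 : bool,
  ex1 [:: l; y0; y2] ->
  forall y3 : bool,
  forall y14 : bool,
  ex1 [:: y1; y3; y14] ->
  forall y4 : bool,
  forall y10 : bool,
  ex1 [:: y2; y4; y10] ->
  forall y5 : bool,
  forall y6 : bool,
  ex1 [:: y3; y6; y5] ->
  forall y7 : bool,
  ex1 [:: y4; y7; y5] ->
  forall y8 : bool,
  forall y17 : bool,
  ex1 [:: y6; y8; y17] ->
  forall y9 : bool,
  forall y13 : bool,
  ex1 [:: y7; y9; y13] ->
  forall y11 : bool,
  ex1 [:: y10; y11] ->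
  forall y12 : bool,
  ex1 [:: y11; y12] ->
  ex1 [:: y12; y13] ->
  forall y15 : bool,
  ex1 [:: y14; y15] ->
  forall y16 : bool,
  ex1 [:: y15; y16] ->
  ex1 [:: y16; y17] ->
  is_true ((x1 ==> y1) && (x8 ==> y8) && ((~~x1 && ~~x8) ==> ((if x4 then y4 else y7) && (if x3 then y3 else y6)))) -> (x0 == y0) && (x1 == y1) && (x2 == y2) && (x3 == y3) && (x4 == y4) && (x5 == y5) && (x6 == y6) && (x7 == y7) && (x8 == y8) && (x9 == y9) && (x10 == y10) && (x11 == y11) && (x12 == y12) && (x13 == y13) && (x14 == y14) && (x15 == y15) && (x16 == y16) && (x17 == y17).
Proof. brute. Qed.

Definition validb (l x0 x1 x2 x3 x4 x5 x6 x7 x8 x9 x10 x11 x12 x13 x14 x15 x16 x17 : bool) := ex1 [:: l; x0; x1] && ex1 [:: l; x0; x2] && ex1 [:: x1; x3; x14] && ex1 [:: x2; x4; x10] && ex1 [:: x3; x6; x5] && ex1 [:: x4; x7; x5] && ex1 [:: x6; x8; x17] && ex1 [:: x7; x9; x13] && ex1 [:: x10; x11] && ex1 [:: x11; x12] && ex1 [:: x12; x13] && ex1 [:: x14; x15] && ex1 [:: x15; x16] && ex1 [:: x16; x17].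

Lemma local_ok l x0 x1 x2 x3 x4 x5 x6 x7 x8 x9 x10 x11 x12 x13 x14 x15 x16 x17 : validb l x0 x1 x2 x3 x4 x5 x6 x7 x8 x9 x10 x11 x12 x13 x14 x15 x16 x17 -> (x8 == x9) && ~~(x1 && x8) && (x1 ==> alt6 x1 x3 x5 x4 x2 x0) && (x8 ==> alt6 x6 x8 false x9 x7 x5) && ((~~x1 && ~~x8) ==> (alt6 x4 x7 x13 x12 x11 x10 && alt6 x15 x16 x17 x6 x3 x14 && (x4 || x7) && (x3 || x6))).
Proof.
rewrite /validb; move=> H; repeat (case/andP: H => H ?).
by eapply local_ord; eassumption.
Qed.

Lemma uniq_ok l x0 x1 x2 x3 x4 x5 x6 x7 x8 x9 x10 x11 x12 x13 x14 x15 x16 x17 y0 y1 y2 y3 y4 y5 y6 y7 y8 y9 y10 y11 y12 y13 y14 y15 y16 y17 : validb l x0 x1 x2 x3 x4 x5 x6 x7 x8 x9 x10 x11 x12 x13 x14 x15 x16 x17 -> validb l y0 y1 y2 y3 y4 y5 y6 y7 y8 y9 y10 y11 y12 y13 y14 y15 y16 y17 -> (x1 ==> y1) && (x8 ==> y8) && ((~~x1 && ~~x8) ==> ((if x4 then y4 else y7) && (if x3 then y3 else y6))) -> (x0 == y0) && (x1 == y1) && (x2 == y2) && (x3 == y3) && (x4 == y4) && (x5 == y5) && (x6 == y6) && (x7 == y7) && (x8 == y8) && (x9 == y9) && (x10 == y10) && (x11 == y11) && (x12 == y12) && (x13 == y13) && (x14 == y14) && (x15 == y15) && (x16 == y16)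 && (x17 == y17).
Proof.
rewrite /validb; move=> H G C; repeat (case/andP: H => H ?); repeat (case/andP: G => G ?).
by eapply uniq_ord; eassumption.
Qed.


Definition loc (t j : nat) : nat :=
  match t with
  | 0 => nth 0 [:: 1; 3; 5; 4; 2; 0] j
  | 1 => nth 0 [:: 6; 8; 0; 9; 7; 5] j
  | 2 => nth 0 [:: 4; 7; 13; 12; 11; 10] j
  | _ => nth 0 [:: 15; 16; 17; 6; 3; 14] j
  end.

Lemma hexE_loc n k t (j : 'I_6) : k < n -> t < 4 ->
  hexE (vtx n (anc k t).1 (anc k t).2) j = edk n (k + ((t == 1) && (j == 2 :> nat))) (loc t j).
Proof.
move=> hk ht; rewrite hexE_anc //; apply: cm_ed.
case: j => j hj /=.
by move: ht; case: t => [|[|[|[|t]]]] // _; move: hj; case: j => [|[|[|[|[|[|j]]]]]] // _;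
  rewrite /cm /=; lia.
Qed.

Lemma Eset_loc n e : e \in Eset n ->
  exists k i, ((k < n /\ i < 18) \/ (k = n /\ i = 0)) /\ e = edk n k i.
Proof.
move=> /bigcupP [a /hexagonsP [k [t [hk ht ->]]]] /imsetP [j _ ->].
rewrite hexE_loc //; exists (k + ((t == 1) && (j == 2 :> nat))), (loc t j); split => //.
case: j => j hj /=.
move: ht; case: t => [|[|[|[|t]]]] // _; move: hj; case: j => [|[|[|[|[|[|j]]]]]] // _ /=;
  rewrite ?addn0 ?addn1; try (left; split => //; done).
case: (ltnP k.+1 n) => h; [left|right]; split => //; lia.
Qed.

Lemma vcons_end n M dy : perfect_matching M -> 0 < n -> 1 <= dy <= 2 ->
  ex1 [seq edk n n i \in M | i <- (if dy == 1 then [:: 18; 0] else [:: 19; 0])].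
Proof.
move=> pm hn hdy.
set L := (if dy == 1 then _ else _).
rewrite (_ : [seq edk n n i \in M | i <- L] = [seq e \in M | e <- map (edk n n) L]);
  last by rewrite -map_comp.
apply: (pm_ex1 (v := vtx n (4*n+1) dy) pm).
- move: hdy; case: dy {L} => [|[|[|dy]]] // _.
  + by apply: (@inVset' n n.-1 1 2) => //=; lia.
  + by apply: (@inVset' n n.-1 1 3) => //=; lia.
- move=> e he hv; have [i hi ->] := complete_end hdy he hv; exact: map_f.
- rewrite /L; move: hdy; case: dy {L} => [|[|[|dy]]] // _ /=;
  by rewrite /edk /= !inE !eqxx ?orbT.
- rewrite /L; move: hdy; case: dy {L} => [|[|[|dy]]] // _ /=;
  rewrite /edk /= !inE ?andbT; apply: ed_neq; lia.
Qed.


Definition bt n (M : {set {set V n}}) k i := edk n k i \in M.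

Lemma edk_succ18 n k : edk n k.+1 18 = edk n k 8.
Proof. by rewrite /edk /=; congr ed; lia. Qed.
Lemma edk_succ19 n k : edk n k.+1 19 = edk n k 9.
Proof. by rewrite /edk /=; congr ed; lia. Qed.

Lemma not_Eset0 n y : y <= 3 -> forall y', ed n 0 y 1 y' \notin Eset n.
Proof.
move=> hy y'; apply/negP => /Eset_inv [k [t [j [hk ht hj E]]]].
have [r1 [r2 r3]] := hxy_range k ht hj.
have hjn : nxt j < 6 by rewrite /nxt; case: eqP => [//|]; lia.
have [s1 [s2 s3]] := hxy_range k ht hjn.
have : vtx n 0 y \in ed n 0 y 1 y' by rewrite !inE eqxx.
rewrite E => /in_ed H; have := H ltac:(lia) ltac:(lia) ltac:(lia) ltac:(lia) ltac:(lia) ltac:(lia).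
lia.
Qed.

Lemma bt0 n (M : {set {set V n}}) : perfect_matching M -> bt M 0 18 = false /\ bt M 0 19 = false.
Proof.
move=> pm; rewrite /bt /edk /=; split; apply/negP => /(subsetP (pm_sub pm)); 
  by rewrite muln0 add0n (negbTE (not_Eset0 _ _ _)).
Qed.

Lemma vc_all n (M : {set {set V n}}) k : perfect_matching M -> k < n -> bt M k 18 = bt M k 19 ->
  validb (bt M k 18) (bt M k 0) (bt M k 1) (bt M k 2) (bt M k 3) (bt M k 4) (bt M k 5)
    (bt M k 6) (bt M k 7) (bt M k 8) (bt M k 9) (bt M k 10) (bt M k 11) (bt M k 12)
    (bt M k 13) (bt M k 14) (bt M k 15) (bt M k 16) (bt M k 17).
Proof.
move=> pm hk; rewrite /bt => e.
have c11 := @vcons n M k 1 1 pm hk erefl erefl erefl.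
have c12 := @vcons n M k 1 2 pm hk erefl erefl erefl.
have c21 := @vcons n M k 2 1 pm hk erefl erefl erefl.
have c22 := @vcons n M k 2 2 pm hk erefl erefl erefl.
have c31 := @vcons n M k 3 1 pm hk erefl erefl erefl.
have c32 := @vcons n M k 3 2 pm hk erefl erefl erefl.
have c41 := @vcons n M k 4 1 pm hk erefl erefl erefl.
have c42 := @vcons n M k 4 2 pm hk erefl erefl erefl.
have c23 := @vcons n M k 2 3 pm hk erefl erefl erefl.
have c33 := @vcons n M k 3 3 pm hk erefl erefl erefl.
have c43 := @vcons n M k 4 3 pm hk erefl erefl erefl.
have c20 := @vcons n M k 2 0 pm hk erefl erefl erefl.
have c30 := @vcons n M k 3 0 pm hk erefl erefl erefl.
have c40 := @vcons n M k 4 0 pm hk erefl erefl erefl.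
cbn [vL map] in c11, c12, c21, c22, c31, c32, c41, c42, c23, c33, c43, c20, c30, c40.
rewrite -e in c12.
by rewrite /validb c11 c12 c21 c22 c31 c32 c41 c42 c23 c33 c43 c20 c30 c40.
Qed.

Lemma invar n (M : {set {set V n}}) : perfect_matching M ->
  forall k, k < n -> bt M k 18 = bt M k 19.
Proof.
move=> pm; elim => [|k IH] hk.
  by have [-> ->] := bt0 pm.
have v := vc_all pm (ltnW hk) (IH (ltnW hk)).
move: (local_ok v) => /andP [/andP [/andP [/andP [/eqP e _] _] _] _].
by rewrite /bt edk_succ18 edk_succ19 -!/(bt M k _) e.
Qed.


Lemma facts n (M : {set {set V n}}) k : perfect_matching M -> k < n ->
  let x i := bt M k i in
  (x 8 == x 9) && ~~(x 1 && x 8) && (x 1 ==> alt6 (x 1) (x 3) (x 5) (x 4) (x 2) (x 0)) &&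
  (x 8 ==> alt6 (x 6) (x 8) false (x 9) (x 7) (x 5)) &&
  ((~~ x 1 && ~~ x 8) ==> (alt6 (x 4) (x 7) (x 13) (x 12) (x 11) (x 10) &&
     alt6 (x 15) (x 16) (x 17) (x 6) (x 3) (x 14) && (x 4 || x 7) && (x 3 || x 6))).
Proof. move=> pm hk; exact: (local_ok (vc_all pm hk (invar pm hk))). Qed.

Lemma junc n (M : {set {set V n}}) k : perfect_matching M -> k < n ->
  ex1 [:: bt M k 18; bt M k 0; bt M k 1].
Proof.
move=> pm hk; have c := @vcons n M k 1 1 pm hk erefl erefl erefl.
by cbn [vL map] in c.
Qed.

Lemma junc_end n (M : {set {set V n}}) : perfect_matching M -> 0 < n ->
  ex1 [:: bt M n 18; bt M n 0].
Proof.
move=> pm hn; have c := @vcons_end n M 1 pm hn erefl.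
by cbn [vL map] in c.
Qed.

Lemma alt_of n (M : {set {set V n}}) (a : V n) :
  alt6 (hexE a (inord 0) \in M) (hexE a (inord 1) \in M) (hexE a (inord 2) \in M)
       (hexE a (inord 3) \in M) (hexE a (inord 4) \in M) (hexE a (inord 5) \in M) ->
  alternating M a.
Proof.
move=> /andP [/andP [/andP [/andP [/andP [h1 h2] h3] h4] h5] h6].
have E : forall j : 'I_6, hexE a j = hexE a (inord j) by move=> j; rewrite inord_val.
apply/forallP => j; rewrite E (E (ordS j)) ordS_val.
by case: j => [[|[|[|[|[|[|j]]]]]] hj] //=; rewrite eq_sym.
Qed.

Definition ancV n (k t : nat) : V n := vtx n (anc k t).1 (anc k t).2.

Lemma hexE_loc' n k t j : k < n -> t < 4 -> j < 6 ->
  hexE (ancV n k t) (inord j) = edk n (k + ((t == 1) && (j == 2))) (loc t j).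
Proof. move=> hk ht hj; rewrite /ancV hexE_loc // inordK //. Qed.

Definition chosenT n (M : {set {set V n}}) (k t : nat) : bool :=
  match t with 0 => bt M k 1 | 1 => bt M k 8 | _ => ~~ bt M k 1 && ~~ bt M k 8 end.

Definition psiE n (M : {set {set V n}}) (k t : nat) : {set V n} :=
  match t with
  | 0 => edk n k 1 | 1 => edk n k 8
  | 2 => if bt M k 4 then edk n k 4 else edk n k 7
  | _ => if bt M k 3 then edk n k 3 else edk n k 6 end.

Definition Ch n (M : {set {set V n}}) : {set 'I_n * 'I_4} :=
  [set kt : 'I_n * 'I_4 | chosenT M kt.1 kt.2].

Definition Rset n (M : {set {set V n}}) : {set V n} :=
  [set ancV n kt.1 kt.2 | kt : 'I_n * 'I_4 in Ch M].

Definition Sset n (M : {set {set V n}}) : {set {set V n}} :=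
  [set psiE M kt.1 kt.2 | kt : 'I_n * 'I_4 in Ch M].

Lemma ancV_inj n : injective (fun kt : 'I_n * 'I_4 => ancV n kt.1 kt.2).
Proof.
move=> [k t] [k' t'] /=; rewrite /ancV => e.
have [r1 r2] := anc_range k (ltn_ord t).
have [s1 s2] := anc_range k' (ltn_ord t').
have hk := ltn_ord k; have hk' := ltn_ord k'.
move/vtx_inj: e => /(_ ltac:(lia) ltac:(lia) ltac:(lia) ltac:(lia)) [e1 e2].
have [ek et] : (k : nat) = k' /\ (t : nat) = t'.
  move: e1 e2 {r1 r2 s1 s2}; case: t => [[|[|[|[|t]]]] ht] //; case: t' => [[|[|[|[|t']]]] ht'] //=; lia.
by congr pair; apply: val_inj.
Qed.

Lemma card_SR n (M : {set {set V n}}) : #|Sset M| <= #|Rset M|.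
Proof.
rewrite /Rset /Sset (card_in_imset (f := fun kt : 'I_n * 'I_4 => ancV n kt.1 kt.2)).
  exact: leq_imset_card.
by move=> x y _ _; apply: ancV_inj.
Qed.

Lemma S_sub n (M : {set {set V n}}) : perfect_matching M -> Sset M \subset M.
Proof.
move=> pm; apply/subsetP => e /imsetP [[k t] /=]; rewrite inE /= => c ->.
have := facts pm (ltn_ord k) => /=.
move=> /andP [_ /implyP F].
case: t c => [[|[|[|[|t]]]] ht] //= c.
- have /andP [/andP [_ G] _] := F c.
  by rewrite /bt in G *; case: ifP => h //; rewrite h in G.
- have /andP [_ G] := F c.
  by rewrite /bt in G *; case: ifP => h //; rewrite h in G.
Qed.

Lemma next_R0 n (M : {set {set V n}}) k : perfect_matching M -> k < n -> bt M k 8 ->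
  bt M k.+1 0 = false.
Proof.
move=> pm hk h8.
have e : bt M k.+1 18 = bt M k 8 by rewrite /bt edk_succ18.
case: (ltnP k.+1 n) => h.
  have := junc pm h; rewrite e h8 /=; by case: (bt M k.+1 0).
have en : k.+1 = n by lia.
rewrite en in e *; have := junc_end pm (leq_ltn_trans (leq0n k) hk); rewrite e h8 /=.
by case: (bt M n 0).
Qed.

Lemma R_alt n (M : {set {set V n}}) (kt : 'I_n * 'I_4) : perfect_matching M ->
  kt \in Ch M -> alternating M (ancV n kt.1 kt.2).
Proof.
move=> pm; case: kt => [k [t ht]]; rewrite inE /= => c.
have hk := ltn_ord k.
apply: alt_of; rewrite !hexE_loc' //.
have := facts pm hk => /= /andP [/andP [/andP [/andP [_ _] F0] F1] F2].
move: ht c; case: t => [|[|[|[|t]]]] //= _ c; rewrite ?addn0 -!/(bt M _ _).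
- exact: (implyP F0 c).
- by rewrite addn1 (next_R0 pm hk c); exact: (implyP F1 c).
- by have /andP [/andP [/andP [G _] _] _] := implyP F2 c.
- by have /andP [/andP [/andP [_ G] _] _] := implyP F2 c.
Qed.

Lemma hxy_bnd c j : j < 6 -> c.1 <= hx c j <= c.1 + 2 /\ c.2 <= hy c j <= c.2 + 1.
Proof. by case: j => [|[|[|[|[|[|j]]]]]] //= _; lia. Qed.

Lemma anc_x k t : t < 4 -> 4*k+1 <= (anc k t).1 <= 4*k+3.
Proof. by case: t => [|[|[|[|t]]]] //= _; lia. Qed.

Lemma R_disj n (M : {set {set V n}}) (kt kt' : 'I_n * 'I_4) : perfect_matching M ->
  kt \in Ch M -> kt' \in Ch M -> kt != kt' ->
  [disjoint hexV (ancV n kt.1 kt.2) & hexV (ancV n kt'.1 kt'.2)].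
Proof.
move=> pm; case: kt => [[k hk] [t ht]]; case: kt' => [[k' hk'] [t' ht']].
rewrite !inE /= => c c' neq.
have neq' : ~ (k = k' /\ t = t').
  move=> [ek et]; subst; move/eqP: neq; apply; congr pair; exact: val_inj.
clear neq.
apply/pred0P => v /=; apply/negP => /andP [/imsetP [j _ ->] /imsetP [j' _ e]].
move: e; rewrite /ancV !hv_anc //.
have [r1 [r2 _]] := hxy_range k ht (ltn_ord j).
have [s1 [s2 _]] := hxy_range k' ht' (ltn_ord j').
move/vtx_inj => /(_ ltac:(lia) ltac:(lia) ltac:(lia) ltac:(lia)) [e1 e2].
have [b1 b2] := hxy_bnd (anc k t) (ltn_ord j).
have [b1' b2'] := hxy_bnd (anc k' t') (ltn_ord j').
move: e1 e2 b1 b2 b1' b2' => e1 e2 b1 b2 b1' b2'.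
have rel : k = k' \/ k' + 1 = k \/ k + 1 = k'.
  have := anc_x k ht; have := anc_x k' ht'; lia.
have F := facts pm hk; have F' := facts pm hk'.
move: F F' => /= /andP [/andP [/andP [/andP [_ NB] _] _] _] /andP [/andP [/andP [/andP [_ NB'] _] _] _].
have J := junc pm hk; have J' := junc pm hk'.
clear r1 r2 s1 s2.
move: ht ht' c c' neq' b1 b2 b1' b2' e1 e2;
  case: t => [|[|[|[|t]]]] //= _; case: t' => [|[|[|[|t']]]] //= _ c c' neq' b1 b2 b1' b2' e1 e2;
  case: rel => [ek|[ek|ek]]; try lia; subst.
all: try (by rewrite ?c /= ?andbF in c'); try (by rewrite ?c' /= ?andbF in c).
all: try (by rewrite c c' in NB); try (by rewrite c c' in NB').
all: rewrite ?addn1 in c c' J J'; move: J J'; rewrite /bt ?edk_succ18 -!/(bt M _ _) => J J'.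
all: try (by move: J; rewrite ?c ?c' /= ?andbF); try (by move: J'; rewrite ?c ?c' /= ?andbF).
Qed.


Lemma R_res n (M : {set {set V n}}) : perfect_matching M -> resonant_set M (Rset M).
Proof.
move=> pm; apply/and3P; split.
- apply/subsetP => a /imsetP [[k t] _ ->]; exact: anc_hex.
- apply/forall_inP => a /imsetP [kt hkt ->]; exact: R_alt.
- apply/forall_inP => a /imsetP [kt hkt ->]; apply/forall_inP => b /imsetP [kt' hkt' ->].
  apply/implyP => neq; apply: (R_disj pm hkt hkt').
  by apply/negP => /eqP E; move/negP: neq; apply; rewrite E.
Qed.

Lemma mem_S n (M : {set {set V n}}) k t (hk : k < n) (ht : t < 4) :
  chosenT M k t -> psiE M k t \in Sset M.
Proof. move=> c; apply/imsetP; exists (Ordinal hk, Ordinal ht) => //; by rewrite inE. Qed.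

Lemma l_agree n (M M' : {set {set V n}}) k : perfect_matching M -> perfect_matching M' ->
  (k = 0 \/ exists k0, k = k0.+1 /\ bt M' k0 8 = bt M k0 8) -> bt M' k 18 = bt M k 18.
Proof.
move=> pm pm' [->|[k0 [-> e]]].
  by have [-> _] := bt0 pm; have [-> _] := bt0 pm'.
by rewrite /bt !edk_succ18 -!/(bt _ _ _) e.
Qed.

Lemma frag_agree n (M M' : {set {set V n}}) k : perfect_matching M -> perfect_matching M' ->
  Sset M \subset M' -> k < n -> bt M' k 18 = bt M k 18 ->
  forall i, i < 18 -> bt M' k i = bt M k i.
Proof.
move=> pm pm' sS hk leq18.
have v := vc_all pm hk (invar pm hk).
have v' := vc_all pm' hk (invar pm' hk).
rewrite leq18 in v'.
have S := fun t ht c => subsetP sS _ (@mem_S n M k t hk ht c).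
have U := uniq_ok v v'.
have C : (bt M k 1 ==> bt M' k 1) && (bt M k 8 ==> bt M' k 8) &&
    ((~~ bt M k 1 && ~~ bt M k 8) ==> ((if bt M k 4 then bt M' k 4 else bt M' k 7) &&
       (if bt M k 3 then bt M' k 3 else bt M' k 6))).
  apply/andP; split; [apply/andP; split|]; apply/implyP => c.
  - exact: (S 0 erefl c).
  - exact: (S 1 erefl c).
  - have s2 := S 2 erefl c; have s3 := S 3 erefl c.
    rewrite /psiE /bt in s2 s3; rewrite /bt.
    by apply/andP; split; [move: s2|move: s3]; case: ifP.
move: (U C) => {}U; repeat (case/andP: U => U ?).
move=> i; do 18! (case: i => [|i]; first by move=> _; apply/esym/eqP; assumption).
by [].
Qed.

Lemma all_agree n (M M' : {set {set V n}}) : perfect_matching M -> perfect_matching M' ->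
  Sset M \subset M' -> forall k, k < n -> forall i, i < 18 -> bt M' k i = bt M k i.
Proof.
move=> pm pm' sS; elim => [|k IH] hk.
  apply: frag_agree => //; apply: l_agree => //; by left.
apply: frag_agree => //; apply: l_agree => //; right; exists k; split => //.
exact: IH (ltnW hk) 8 erefl.
Qed.

Lemma end_agree n (M M' : {set {set V n}}) : 0 < n -> perfect_matching M -> perfect_matching M' ->
  Sset M \subset M' -> bt M' n 0 = bt M n 0.
Proof.
move=> hn pm pm' sS.
have J := junc_end pm hn; have J' := junc_end pm' hn.
case: n hn M M' pm pm' sS J J' => [//|n] _ M M' pm pm' sS J J'.
have e := all_agree pm pm' sS (ltnSn n) (i := 8) erefl.
move: J J'; rewrite /bt !edk_succ18 -!/(bt _ _ _) e.
by case: (bt M n 8); case: (bt M n.+1 0); case: (bt M' n.+1 0).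
Qed.

Lemma S_forcing n (M : {set {set V n}}) : 0 < n -> perfect_matching M -> forcing_set M (Sset M).
Proof.
move=> hn pm; apply/andP; split; first exact: S_sub.
apply/forallP => M'; apply/implyP => /andP [pm' sS]; apply/eqP/setP => e.
case: (boolP (e \in Eset n)) => he.
  have [k [i [h ->]]] := Eset_loc he.
  case: h => [[hk hi]|[-> ->]].
    exact: all_agree pm pm' sS k hk i hi.
  exact: end_agree.
apply/idP/idP => h; [have := subsetP (pm_sub pm') e h | have := subsetP (pm_sub pm) e h];
  by rewrite (negbTE he).
Qed.

Unset Implicit Arguments.

Theorem lemma2p3 (n : nat) (M : {set {set V n}}) :
  0 < n -> perfect_matching M -> forcing_number M = hmax M.
Proof.
move=> hn pm; apply/eqP; rewrite eqn_leq fn_ge_h // andbT.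
rewrite /forcing_number.
apply: (leq_trans (@bigmin_le _ (fun S => forcing_set M S) (fun S => #|S|) #|M| _ (S_forcing hn pm))).
apply: (leq_trans (card_SR M)).
exact: (leq_bigmax_cond _ (R_res pm)).
Qed.
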